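(* Let $\kappa$ be a cardinal and let $(X,\tau)$ be a $\kappa$-exclusive space with Lindelöf degree $L(X)=\kappa$. Then $X$ is a D-space.
   Context: The Lindelöf degree $L(X)$ is the least cardinal $\kappa$ such that every open cover of $X$ has a subcover of cardinality at most $\kappa$. For a cardinal $\kappa$, $(X,\tau)$ is $\kappa$-exclusive if for every $x\in X$, every open neighborhood $U$ of $x$, and every $A\subseteq U$ with $x\notin A$ and $|A|\le\kappa$, there is an open neighborhood $V$ of $x$ with $V\subseteq U\setminus A$. An open neighborhood assignment is a function $N:X\to\tau$ with $x\in N(x)$ for all $x$. $X$ is a D-space if for every open neighborhood assignment $N$ there is a closed discrete $D\subseteq X$ with $\bigcup_{d\in D}N(d)=X$. *)

(* Defs.v *)
From HB Require Import structures.
From mathcomp Require Import all_boot all_order.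
From mathcomp Require Import boolp classical_sets functions cardinality.
From mathcomp Require Import topology.
Set Implicit Arguments. Unset Strict Implicit. Unset Printing Implicit Defensive.
Local Open Scope classical_set_scope.
Local Open Scope card_scope.

(* A cardinal kappa is represented by a type K (|K| = kappa);
   "|A| <= kappa" is  A #<= [set: K]  (an injection of A into K). *)

Definition open_covers_bounded_by (X : topologicalType) (K : Type) :=
  forall C : set (set X),
    (forall U, C U -> open U) -> \bigcup_(U in C) U = setT ->
    exists C' : set (set X), C' `<=` C /\ C' #<= [set: K] /\
      \bigcup_(U in C') U = setT.

Definition Lindelof_degree_eq (X : topologicalType) (K : Type) :=
  open_covers_bounded_by X K /\
  forall L : Type, open_covers_bounded_by X L -> [set: K] #<= [set: L].

Definition exclusive (X : topologicalType) (K : Type) :=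
  forall (x : X) (U : set X) (A : set X),
    open U -> U x -> A `<=` U -> ~ A x -> A #<= [set: K] ->
    exists V : set X, open V /\ V x /\ V `<=` U `\` A.

Definition open_nbhd_assignment (X : topologicalType) (N : X -> set X) :=
  forall x, open (N x) /\ N x x.

Definition closed_discrete (X : topologicalType) (D : set X) :=
  closed D /\ forall d, D d -> exists U : set X, open U /\ U `&` D = [set d].

Definition D_space (X : topologicalType) :=
  forall N : X -> set X, open_nbhd_assignment N ->
    exists D : set X, closed_discrete D /\ \bigcup_(d in D) N d = setT.

(* Main.v *)
Require Import Defs.
From mathcomp Require Import all_boot boolp classical_sets cardinality topology.
Local Open Scope classical_set_scope.
Local Open Scope card_scope.

Lemma small_closed (K : Type) (X : topologicalType) (A : set X) :
  exclusive X K -> A #<= [set: K] -> closed A.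
Proof.
move=> ex AK; rewrite -openC openE => x Ax.
have [V [oV [Vx VA]]] := ex x setT A openT I (fun _ _ => I) Ax AK.
rewrite /interior; apply: (@filterS _ _ _ V).
  by move=> y /VA [].
by apply: open_nbhs_nbhs; split.
Qed.

Theorem mainTheorem6 (K : Type) (X : topologicalType) :
  exclusive X K -> Lindelof_degree_eq X K -> D_space X.
Proof.
move=> ex [cov _] N hN.
have [[x0 _]|nX] := pselect (exists x : X, True); last first.
  exists set0; split; last by apply/seteqP; split => // x; case: nX; exists x.
  split; first exact: closed0.
  by move=> d [].
have [C' [C'C [C'K C'cov]]] : exists C' : set (set X), C' `<=` range N /\ C' #<= [set: K] /\
      \bigcup_(U in C') U = setT.
  apply: cov.
    by move=> U [x _ <-]; exact: (hN x).1.
  by apply/seteqP; split => // x _; exists (N x); [exists x | exact: (hN x).2].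
have pick : forall U, exists x, C' U -> N x = U.
  move=> U; have [/C'C [x _ <-]|nU] := pselect (C' U); first by exists x.
  by exists x0.
have [f fP] := choice pick.
pose D := f @` C'.
have DK : D #<= [set: K] by apply: card_le_trans (card_image_le _ _) C'K.
exists D; split; first split.
- exact: small_closed ex DK.
- move=> d Dd; exists (~` (D `\ d)); split.
    by rewrite openC; apply: small_closed ex (card_le_trans (card_le_setD _ _) DK).
  apply/seteqP; split => y.
    by move=> [nD Dy]; apply: contrapT => yd; apply: nD.
  move=> /= ->; split; last exact: Dd.
  by move=> [_ /(_ erefl)].
- apply/seteqP; split => // x _.
  have : (\bigcup_(U in C') U) x by rewrite C'cov.
  move=> [U C'U Ux]; exists (f U); first by exists U.
  by rewrite fP.
Qed.
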